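(* Let $n\ge3$, $D>0$, $T\ge1$ and $G_1,\dots,G_T>0$. Consider the following $T$-round game on $\mathcal{D}^n_{++}$ with the affine-invariant metric. In round $t$ the player chooses a real diagonal matrix $Y_t$ with $\|Y_t\|_F\le D/2$ (i.e. the point $p_t=e^{Y_t}\in\mathcal{N}_D:=\{e^Y: Y\text{ real diagonal},\ \|Y\|_F\le D/2\}$), then the adversary chooses a real diagonal matrix $X_t$ with $\|X_t\|_F\le G_t$, which defines the loss $f_t(p)=-\mathrm{tr}(X_t\log p)$ on $\mathcal{D}^n_{++}$. Let $$\mathcal{V}_T=\inf_{Y_1}\sup_{X_1}\cdots\inf_{Y_T}\sup_{X_T}\Big[\sum_{t=1}^Tf_t(p_t)-\inf_{p\in\mathcal{N}_D}\sum_{t=1}^Tf_t(p)\Big].$$ Then $\mathcal{V}_T=\frac D2\sqrt{\sum_{t=1}^TG_t^2}$. Moreover, the player strategy $$Y_t=\frac D2\cdot\frac{\sum_{s=1}^{t-1}X_s}{\sqrt{\big\|\sum_{s=1}^{t-1}X_s\big\|_F^2+\sum_{s=t}^TG_s^2}}$$ guarantees regret at most $\frac D2\sqrt{\sum_{t=1}^TG_t^2}$ against every adversary.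
   Context: $\mathcal{D}^n_{++}$ is the set of $n\times n$ diagonal matrices with positive diagonal entries, a submanifold of the SPD matrices with the affine-invariant metric $\langle U,V\rangle_p=\mathrm{tr}(p^{-1}Up^{-1}V)$; its tangent spaces are the real diagonal matrices, $\mathrm{Exp}_I(Y)=e^Y$, and the distance is $d(p,q)=\big(\sum_i(\log\lambda_i(q^{-1/2}pq^{-1/2}))^2\big)^{1/2}$, so $\mathcal{N}_D$ is the geodesic ball of radius $D/2$ about $I$. $\|\cdot\|_F$ is the Frobenius norm, $\log$ the matrix logarithm. Each loss $f_t$ is a nonnegative multiple (at most $G_t$) of a Busemann function and is gsc-convex with gradient norm at most $G_t$. Empty sums equal $0$. *)

(* Defs.v *)
From HB Require Import structures.
From mathcomp Require Import all_boot all_order all_algebra.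
From mathcomp Require Import all_classical all_reals all_analysis.
Set Implicit Arguments. Unset Strict Implicit. Unset Printing Implicit Defensive.
Import Order.TTheory GRing.Theory Num.Theory.
Local Open Scope ring_scope.
Local Open Scope classical_set_scope.

Section Defs.
Variables (R : realType) (n : nat).

Definition frob (A : 'M[R]_n) : R := Num.sqrt (\sum_(i < n) \sum_(j < n) A i j ^+ 2).

Definition expD (Y : 'M[R]_n) : 'M[R]_n :=
  \matrix_(i, j) (if i == j then expR (Y i j) else 0).
Definition logD (p : 'M[R]_n) : 'M[R]_n :=
  \matrix_(i, j) (if i == j then ln (p i j) else 0).

Definition Dpp : set 'M[R]_n :=
  [set p | is_diag_mx p /\ forall i, 0 < p i i].

Definition ballD (D : R) : set 'M[R]_n :=
  [set Y | is_diag_mx Y /\ frob Y <= D / 2].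
Definition N_D (D : R) : set 'M[R]_n := expD @` ballD D.

Definition ballG (G : nat -> R) (t : nat) : set 'M[R]_n :=
  [set X | is_diag_mx X /\ frob X <= G t].

Definition loss (X p : 'M[R]_n) : R := - \tr (X *m logD p).

(* regret of a complete play of T rounds, moves given as functions of t (t = 0..T-1) *)
Definition regret (D : R) (T : nat) (Y X : nat -> 'M[R]_n) : \bar R :=
  ((\sum_(t < T) loss (X t) (expD (Y t)))%:E -
   ereal_inf [set (\sum_(t < T) loss (X t) p)%:E | p in N_D D])%E.

(* nested inf_Y sup_X game value; hist = list of played (Y_t, X_t) pairs *)
Fixpoint gameval (D : R) (G : nat -> R) (T : nat) (m : nat)
  (hist : seq ('M[R]_n * 'M[R]_n)) : \bar R :=
  match m with
  | 0 => regret D T (fun t => (nth (0, 0) hist t).1) (fun t => (nth (0, 0) hist t).2)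
  | m'.+1 =>
      ereal_inf [set ereal_sup [set gameval D G T m' (rcons hist (Y, X))
                               | X in ballG G (size hist)]
                | Y in ballD D]
  end.

Definition V_T (D : R) (G : nat -> R) (T : nat) : \bar R := gameval D G T T [::].

Definition strat (D : R) (G : nat -> R) (T : nat) (X : nat -> 'M[R]_n) (t : nat)
  : 'M[R]_n :=
  let S := \sum_(s < t) X s in
  (D / 2 / Num.sqrt (frob S ^+ 2 + \sum_(t <= s < T) G s ^+ 2)) *: S.

End Defs.

(* Main.v *)
Require Import Defs.
From HB Require Import structures.
From mathcomp Require Import all_boot all_order all_algebra.
From mathcomp Require Import all_classical all_reals all_analysis.
From mathcomp Require Import ring lra zify.
Import Order.TTheory GRing.Theory Num.Theory.
Local Open Scope ring_scope.
Local Open Scope classical_set_scope.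
Set Implicit Arguments. Unset Strict Implicit. Unset Printing Implicit Defensive.

Section Aux.
Variables (R : realType) (n : nat).
Local Notation M := 'M[R]_n.

Definition dotd (A B : M) : R := \sum_i A i i * B i i.
Definition ssq (A : M) : R := \sum_i \sum_j A i j ^+ 2.

Lemma ssq_ge0 (A : M) : 0 <= ssq A.
Proof. by apply: sumr_ge0 => i _; apply: sumr_ge0 => j _; apply: sqr_ge0. Qed.

Lemma frob_sq (A : M) : frob A ^+ 2 = ssq A.
Proof. by rewrite /frob sqr_sqrtr // ssq_ge0. Qed.

Lemma frob_ge0 (A : M) : 0 <= frob A.
Proof. exact: sqrtr_ge0. Qed.

Lemma sum_pick (f : 'I_n -> R) i : (forall j, j != i -> f j = 0) -> \sum_j f j = f i.
Proof. by move=> H; rewrite (bigD1 i) //= big1 ?addr0 // => j /H. Qed.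

Lemma loss_expD (X Y : M) : loss X (expD Y) = - dotd X Y.
Proof.
rewrite /loss /dotd /mxtrace; congr (- _); apply: eq_bigr => i _.
rewrite mxE (@sum_pick _ i) => [|j ji]; last by rewrite !mxE (negbTE ji) mulr0.
by rewrite !mxE !eqxx expRK.
Qed.

Lemma diag_sq_le (A : M) : \sum_i A i i ^+ 2 <= ssq A.
Proof.
apply: ler_sum => i _; rewrite (bigD1 i) //= lerDl.
by apply: sumr_ge0 => j _; apply: sqr_ge0.
Qed.

Lemma dotdC (A B : M) : dotd A B = dotd B A.
Proof. by apply: eq_bigr => i _; rewrite mulrC. Qed.

Lemma CS_sum (u v : 'I_n -> R) :
  (\sum_i u i * v i) ^+ 2 <= (\sum_i u i ^+ 2) * (\sum_i v i ^+ 2).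
Proof.
have E : \sum_i \sum_j (u i * v j - u j * v i) ^+ 2 =
  2 * ((\sum_i u i ^+ 2) * (\sum_i v i ^+ 2) - (\sum_i u i * v i) ^+ 2).
  have E1 : (\sum_i u i ^+ 2) * (\sum_i v i ^+ 2) = \sum_i \sum_j u i ^+ 2 * v j ^+ 2.
    by rewrite big_distrlr.
  have E2 : (\sum_i u i ^+ 2) * (\sum_i v i ^+ 2) = \sum_i \sum_j u j ^+ 2 * v i ^+ 2.
    by rewrite mulrC big_distrlr /=; apply: eq_bigr => i _; apply: eq_bigr => j _; rewrite mulrC.
  have E3 : (\sum_i u i * v i) ^+ 2 = \sum_i \sum_j (u i * v i) * (u j * v j).
    by rewrite expr2 big_distrlr.
  have -> : 2 * ((\sum_i u i ^+ 2) * (\sum_i v i ^+ 2) - (\sum_i u i * v i) ^+ 2) =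
     (\sum_i u i ^+ 2) * (\sum_i v i ^+ 2) + (\sum_i u i ^+ 2) * (\sum_i v i ^+ 2)
      - 2 * (\sum_i u i * v i) ^+ 2 by ring.
  rewrite {1}E1 E2 E3 -big_split /= mulr_sumr -sumrB; apply: eq_bigr => i _.
  rewrite -big_split /= mulr_sumr -sumrB; apply: eq_bigr => j _; ring.
have : 0 <= \sum_i \sum_j (u i * v j - u j * v i) ^+ 2.
  by apply: sumr_ge0 => i _; apply: sumr_ge0 => j _; apply: sqr_ge0.
by rewrite E pmulr_rge0 // subr_ge0.
Qed.

Lemma dotd_sq (A B : M) : dotd A B ^+ 2 <= (frob A * frob B) ^+ 2.
Proof.
apply: le_trans (CS_sum _ _) _.
rewrite exprMn !frob_sq; apply: ler_pM.
- by apply: sumr_ge0 => i _; apply: sqr_ge0.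
- by apply: sumr_ge0 => i _; apply: sqr_ge0.
- exact: diag_sq_le.
- exact: diag_sq_le.
Qed.

Lemma dotd_le (A B : M) : dotd A B <= frob A * frob B.
Proof.
have := dotd_sq A B; have := mulr_ge0 (frob_ge0 A) (frob_ge0 B).
move: (dotd A B) (frob A * frob B) => d p hp; rewrite !expr2 => h; nra.
Qed.

Lemma dotd_ge (A B : M) : - (frob A * frob B) <= dotd A B.
Proof.
have := dotd_sq A B; have := mulr_ge0 (frob_ge0 A) (frob_ge0 B).
move: (dotd A B) (frob A * frob B) => d p hp; rewrite !expr2 => h; nra.
Qed.

Lemma ssqD (A X : M) : is_diag_mx X -> ssq (A + X) = ssq A + 2 * dotd A X + ssq X.
Proof.
move=> /is_diag_mxP Xd.
have E : \sum_i \sum_j A i j * X i j = dotd A X.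
  apply: eq_bigr => i _; apply: (@sum_pick _ i) => j ji.
  by rewrite Xd ?mulr0 // eq_sym.
rewrite /ssq -E mulr_sumr -!big_split /=; apply: eq_bigr => i _.
rewrite mulr_sumr -!big_split /=; apply: eq_bigr => j _; rewrite mxE; ring.
Qed.

End Aux.
Lemma key_real (R : realType) (a x g A d D P Q : R) : 0 <= a -> 0 <= x -> x <= g -> 0 <= A ->
  0 <= D -> -(a * x) <= d -> 0 < P -> P ^+ 2 = a ^+ 2 + g ^+ 2 + A -> 0 <= Q ->
  Q ^+ 2 = a ^+ 2 + 2 * d + x ^+ 2 + A ->
  - (D / 2 / P * d) + D / 2 * Q <= D / 2 * P.
Proof.
move=> a0 x0 xg A0 D0 dge P0 PE Q0 QE.
set u := d / P.
have du : d = u * P by rewrite /u mulfVK // gt_eqF.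
clearbody u.
have hu : 0 <= P + u.
  have : 0 <= (P + u) * P.
    have -> : (P + u) * P = P ^+ 2 + d by rewrite du expr2 mulrDl.
    rewrite PE; nra.
  move=> h; nra.
have hQ : Q <= P + u.
  have : Q ^+ 2 <= (P + u) ^+ 2.
    have -> : (P + u) ^+ 2 = P ^+ 2 + 2 * d + u ^+ 2 by rewrite du !expr2; ring.
    rewrite QE PE; nra.
  rewrite !expr2 => h; nra.
have -> : D / 2 / P * d = D / 2 * u.
  by rewrite du; field; rewrite gt_eqF.
have : 0 <= D / 2 by lra.
nra.
Qed.

Lemma orth_exists (R : realType) n (S Y : 'M[R]_n) (g : R) : (3 <= n)%N -> 0 <= g ->
  exists X : 'M[R]_n, [/\ is_diag_mx X, frob X = g, dotd S X = 0 & dotd X Y = 0].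
Proof.
move=> n3 g0.
pose Mx : 'M[R]_(n, 2) := \matrix_(i, j) (if j == 0 then S i i else Y i i).
have Kn0 : kermx Mx != 0.
  rewrite -mxrank_eq0 mxrank_ker subn_eq0 -ltnNge.
  exact: leq_ltn_trans (rank_leq_col Mx) n3.
have [i [j Kij]] : exists i j, kermx Mx i j != 0.
  apply: contrapT => H; move/negP: Kn0; apply; apply/eqP/matrixP => i j.
  rewrite [RHS]mxE; case: (boolP (kermx Mx i j == 0)) => [/eqP //|h].
  by case: H; exists i, j.
pose v k := kermx Mx i k.
have hr : forall c, \sum_k v k * Mx k c = 0.
  move=> c; have := congr1 (fun A : 'M[R]_(n, 2) => A i c) (mulmx_ker Mx).
  by rewrite [LHS]mxE [RHS]mxE.
pose Q := \sum_k v k ^+ 2.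
have Qpos : 0 < Q.
  apply: (@lt_le_trans _ _ (v j ^+ 2)).
    by rewrite lt_def sqrf_eq0 Kij sqr_ge0.
  rewrite /Q (bigD1 j) //= lerDl.
  by apply: sumr_ge0 => k _; apply: sqr_ge0.
pose c := g / Num.sqrt Q.
pose X : 'M[R]_n := \matrix_(a, b) (if a == b then c * v a else 0).
exists X; split.
- apply/is_diag_mxP => a b ab; rewrite mxE; case: eqP => // e.
  by rewrite e eqxx in ab.
- rewrite /frob.
  have -> : \sum_(a < n) \sum_(b < n) X a b ^+ 2 = c ^+ 2 * Q.
    rewrite /Q mulr_sumr; apply: eq_bigr => a _.
    rewrite (@sum_pick _ _ _ a) => [|b ba]; last by rewrite mxE eq_sym (negbTE ba) expr0n.
    by rewrite mxE eqxx exprMn.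
  have -> : c ^+ 2 * Q = g ^+ 2.
    rewrite /c exprMn exprVn sqr_sqrtr ?ltW //.
    by rewrite mulfVK // gt_eqF.
  by rewrite sqrtr_sqr ger0_norm.
- rewrite /dotd.
  transitivity (c * \sum_k v k * Mx k 0); last by rewrite hr mulr0.
  rewrite mulr_sumr; apply: eq_bigr => k _; rewrite !mxE eqxx /=; ring.
- rewrite /dotd.
  transitivity (c * \sum_k v k * Mx k 1); last by rewrite hr mulr0.
  rewrite mulr_sumr; apply: eq_bigr => k _; rewrite !mxE eqxx /=; ring.
Qed.

Section Game.
Variables (R : realType) (n : nat).
Local Notation M := 'M[R]_n.

Definition Phi (G : nat -> R) (T : nat) (X : nat -> M) (k : nat) : R :=
  Num.sqrt (frob (\sum_(s < k) X s) ^+ 2 + \sum_(k <= s < T) G s ^+ 2).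
Definition Lk (Y X : nat -> M) (k : nat) : R := \sum_(t < k) loss (X t) (expD (Y t)).

Lemma dotdZr (A B : M) c : dotd A (c *: B) = c * dotd A B.
Proof. by rewrite /dotd mulr_sumr; apply: eq_bigr => i _; rewrite mxE; ring. Qed.

Lemma dotd_suml (X : nat -> M) k (B : M) :
  dotd (\sum_(t < k) X t) B = \sum_(t < k) dotd (X t) B.
Proof.
rewrite /dotd exchange_big /=; apply: eq_bigr => i _.
by rewrite summxE mulr_suml.
Qed.

Lemma frob0 : frob (0 : M) = 0.
Proof.
rewrite /frob big1 ?sqrtr0 // => i _; rewrite big1 // => j _; rewrite mxE; ring.
Qed.

Lemma frobZ c (A : M) : frob (c *: A) = `|c| * frob A.
Proof.
rewrite /frob -sqrtr_sqr -sqrtrM ?sqr_ge0 //; congr Num.sqrt.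
rewrite mulr_sumr; apply: eq_bigr => i _; rewrite mulr_sumr; apply: eq_bigr => j _.
rewrite mxE; ring.
Qed.

Lemma diag_add (A B : M) : is_diag_mx A -> is_diag_mx B -> is_diag_mx (A + B).
Proof.
move=> /is_diag_mxP hA /is_diag_mxP hB; apply/is_diag_mxP => i j ij.
by rewrite mxE hA // hB // addr0.
Qed.

Lemma diag_scale c (A : M) : is_diag_mx A -> is_diag_mx (c *: A).
Proof.
move=> /is_diag_mxP hA; apply/is_diag_mxP => i j ij.
by rewrite mxE hA // mulr0.
Qed.

Lemma diag_sum (X : nat -> M) k : (forall s, (s < k)%N -> is_diag_mx (X s)) ->
  is_diag_mx (\sum_(s < k) X s).
Proof.
move=> h; elim: k h => [|k IH] h; first by rewrite big_ord0 mx0_is_diag.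
rewrite big_ord_recr /=; apply: diag_add; last exact: h.
by apply: IH => s sk; apply: h; apply: ltnW.
Qed.

Lemma dotd_self (A : M) : is_diag_mx A -> dotd A A = ssq A.
Proof.
move=> /is_diag_mxP hA; rewrite /dotd /ssq; apply: eq_bigr => i _.
rewrite (@sum_pick _ _ _ i) ?expr2 // => j ji; rewrite hA ?expr0n //.
by rewrite eq_sym.
Qed.

Lemma sum_loss (X : nat -> M) k (Y : M) :
  \sum_(t < k) loss (X t) (expD Y) = - dotd (\sum_(t < k) X t) Y.
Proof. by rewrite dotd_suml -sumrN; apply: eq_bigr => t _; rewrite loss_expD. Qed.

Lemma regret_ub (D : R) T (Y X : nat -> M) :
  (regret D T Y X <= (Lk Y X T + D / 2 * frob (\sum_(t < T) X t))%:E)%E.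
Proof.
rewrite /regret EFinD -(opprK (D / 2 * _)) EFinN.
apply: leeB => //.
apply: le_ereal_inf_tmp => z [p [Y' [dY fY] <-] <-].
rewrite lee_fin sum_loss lerN2.
apply: le_trans (dotd_le _ _) _.
by rewrite mulrC ler_wpM2r // frob_ge0.
Qed.

Lemma regret_lb (D : R) T (Y X : nat -> M) : 0 <= D ->
  is_diag_mx (\sum_(t < T) X t) ->
  ((Lk Y X T + D / 2 * frob (\sum_(t < T) X t))%:E <= regret D T Y X)%E.
Proof.
move=> D0 dS; set S := \sum_(t < T) X t.
rewrite /regret EFinD -(opprK (D / 2 * _)) EFinN.
apply: leeB => //.
pose c := D / 2 / frob S.
apply: ereal_inf_lbound; exists (expD (c *: S)).
  exists (c *: S) => //; split; first exact: diag_scale.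
  rewrite frobZ ger0_norm; last by rewrite /c divr_ge0 ?frob_ge0 // divr_ge0.
  have [f0|fn0] := eqVneq (frob S) 0.
    by rewrite f0 mulr0 divr_ge0.
  by rewrite /c mulfVK.
rewrite sum_loss dotdZr dotd_self // -frob_sq /c.
have [f0|fn0] := eqVneq (frob S) 0; first by rewrite f0 !mulr0 expr0n /= mulr0.
congr (- _)%:E; rewrite expr2 mulrA mulfVK //.
Qed.

Lemma Phi_ext G T (X1 X2 : nat -> M) k : (forall s, (s < k)%N -> X1 s = X2 s) ->
  Phi G T X1 k = Phi G T X2 k.
Proof.
move=> h; rewrite /Phi; congr (Num.sqrt (frob _ ^+ 2 + _)).
by apply: eq_bigr => s _; apply: h.
Qed.

Lemma strat_ext D G T (X1 X2 : nat -> M) k : (forall s, (s < k)%N -> X1 s = X2 s) ->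
  strat D G T X1 k = strat D G T X2 k.
Proof.
move=> h; have E : \sum_(s < k) X1 s = \sum_(s < k) X2 s.
  by apply: eq_bigr => s _; apply: h.
by rewrite /strat /= E.
Qed.

Lemma Lk_ext (Y1 X1 Y2 X2 : nat -> M) k :
  (forall s, (s < k)%N -> X1 s = X2 s /\ Y1 s = Y2 s) -> Lk Y1 X1 k = Lk Y2 X2 k.
Proof.
by move=> h; apply: eq_bigr => s _; have [-> ->] := h _ (ltn_ord s).
Qed.

Lemma stratE D G T (X : nat -> M) k :
  strat D G T X k = (D / 2 / Phi G T X k) *: \sum_(s < k) X s.
Proof. by []. Qed.

Lemma Phi_pos G T (X : nat -> M) k : (k < T)%N -> 0 < G k -> 0 < Phi G T X k.
Proof.
move=> kT Gk; rewrite /Phi sqrtr_gt0 (big_ltn kT).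
have : 0 <= \sum_(k.+1 <= s < T) G s ^+ 2 by apply: sumr_ge0 => s _; apply: sqr_ge0.
have := sqr_ge0 (frob (\sum_(s < k) X s)); have : 0 < G k ^+ 2 by rewrite exprn_gt0.
lra.
Qed.

Lemma step (D : R) G T (X : nat -> M) k : (k < T)%N -> 0 < G k -> 0 <= D ->
  is_diag_mx (X k) -> frob (X k) <= G k ->
  loss (X k) (expD (strat D G T X k)) + D / 2 * Phi G T X k.+1 <= D / 2 * Phi G T X k.
Proof.
move=> kT Gk D0 dX fX.
have P0 := Phi_pos X kT Gk.
rewrite stratE loss_expD dotdZr dotdC.
set S := \sum_(s < k) X s.
have SE : \sum_(s < k.+1) X s = S + X k by rewrite big_ord_recr.
set A := \sum_(k.+1 <= s < T) G s ^+ 2.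
have A0 : 0 <= A by apply: sumr_ge0 => s _; apply: sqr_ge0.
have PE : Phi G T X k ^+ 2 = frob S ^+ 2 + G k ^+ 2 + A.
  rewrite /Phi sqr_sqrtr; last by apply: ltW; rewrite -sqrtr_gt0.
  by rewrite (big_ltn kT) addrA.
have QE : Phi G T X k.+1 ^+ 2 =
    frob S ^+ 2 + 2 * dotd S (X k) + frob (X k) ^+ 2 + A.
  rewrite /Phi SE sqr_sqrtr; last by rewrite addr_ge0 ?sqr_ge0.
  by rewrite frob_sq ssqD // -!frob_sq.
apply: (key_real (frob_ge0 S) (frob_ge0 (X k)) fX A0 D0 (dotd_ge S (X k)) P0 PE) => //.
exact: sqrtr_ge0.
Qed.

End Game.

Section Game2.
Variables (R : realType) (n : nat).
Local Notation M := 'M[R]_n.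

Definition Yh (h : seq (M * M)) t := (nth (0, 0) h t).1.
Definition Xh (h : seq (M * M)) t := (nth (0, 0) h t).2.

Lemma nth_rcons_lt (h : seq (M * M)) p t : (t < size h)%N ->
  nth (0, 0) (rcons h p) t = nth (0, 0) h t.
Proof. by move=> th; rewrite nth_rcons th. Qed.

Lemma nth_rcons_eq (h : seq (M * M)) p : nth (0, 0) (rcons h p) (size h) = p.
Proof. by rewrite nth_rcons ltnn eqxx. Qed.

Lemma PhiT G T (X : nat -> M) : Phi G T X T = frob (\sum_(t < T) X t).
Proof.
by rewrite /Phi big_geq // addr0 sqrtr_sqr ger0_norm // frob_ge0.
Qed.

Lemma Phi0 G T (X : nat -> M) : Phi G T X 0 = Num.sqrt (\sum_(t < T) G t ^+ 2).
Proof. by rewrite /Phi big_ord0 frob0 expr0n /= add0r big_mkord. Qed.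

Lemma strat_ball (D : R) G T (X : nat -> M) k : (k < T)%N -> 0 < G k -> 0 <= D ->
  (forall s, (s < k)%N -> is_diag_mx (X s)) -> ballD D (strat D G T X k).
Proof.
move=> kT Gk D0 hd; have P0 := Phi_pos X kT Gk.
rewrite stratE; split; first by apply: diag_scale; apply: diag_sum.
rewrite frobZ ger0_norm; last by apply: divr_ge0; [apply: divr_ge0 | apply: ltW].
rewrite mulrAC ler_pdivrMr //; apply: ler_wpM2l; first by apply: divr_ge0.
rewrite /Phi -{1}(ger0_norm (frob_ge0 (\sum_(s < k) X s))) -sqrtr_sqr ler_sqrt.
  by rewrite lerDl; apply: sumr_ge0 => s _; apply: sqr_ge0.
by rewrite addr_ge0 ?sqr_ge0 //; apply: sumr_ge0 => s _; apply: sqr_ge0.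
Qed.

Lemma strat_bound (D : R) G T (X : nat -> M) : 0 <= D ->
  (forall t, (t < T)%N -> 0 < G t) -> (forall t, (t < T)%N -> ballG G t (X t)) ->
  forall k, (k <= T)%N ->
  Lk (strat D G T X) X k + D / 2 * Phi G T X k <= D / 2 * Phi G T X 0.
Proof.
move=> D0 Gp hX; elim => [|k IH] kT; first by rewrite /Lk big_ord0 add0r.
have kT' : (k < T)%N by [].
have := IH (ltnW kT').
have [dX fX] := hX k kT'.
have := @step R n D G T X k kT' (Gp k kT') D0 dX fX.
rewrite /Lk big_ord_recr /=; lra.
Qed.

Lemma game_ub (D : R) G T : 0 <= D -> (forall t, (t < T)%N -> 0 < G t) ->
  forall m (hist : seq (M * M)), (size hist + m)%N = T ->
  (forall t, (t < size hist)%N -> is_diag_mx (Xh hist t)) ->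
  (gameval D G T m hist <=
    (Lk (Yh hist) (Xh hist) (size hist) + D / 2 * Phi G T (Xh hist) (size hist))%:E)%E.
Proof.
move=> D0 Gp; elim => [|m IH] hist hs hd.
  rewrite addn0 in hs; rewrite /= hs.
  by apply: le_trans (regret_ub _ _ _ _) _; rewrite PhiT.
rewrite /=.
set k := size hist.
have kT : (k < T)%N by rewrite -hs /k; lia.
pose Ys := strat D G T (Xh hist) k.
apply: (@le_trans _ _ (ereal_sup [set gameval D G T m (rcons hist (Ys, X)) | X in ballG G k])).
  apply: ereal_inf_lbound; exists Ys => //.
  by apply: strat_ball => //; apply: Gp.
apply: ge_ereal_sup => z [X [dX fX] <-].
pose h' := rcons hist (Ys, X).
have E1 : forall t, (t < k)%N -> nth (0, 0) h' t = nth (0, 0) hist t.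
  by move=> t tk; rewrite /h' nth_rcons_lt.
have E2 : nth (0, 0) h' k = (Ys, X) by rewrite /h' nth_rcons_eq.
have sz : size h' = k.+1 by rewrite /h' size_rcons.
apply: le_trans (IH h' _ _) _.
- by rewrite sz addSnnS.
- move=> t; rewrite sz ltnS leq_eqVlt => /orP [/eqP ->|tk].
    by rewrite /Xh E2.
  by rewrite /Xh E1 //; apply: hd.
rewrite lee_fin sz.
have LE : Lk (Yh h') (Xh h') k.+1 = Lk (Yh hist) (Xh hist) k + loss X (expD Ys).
  rewrite /Lk big_ord_recr /= /Yh /Xh E2 /=; congr (_ + _).
  by apply: eq_bigr => s _; rewrite E1.
have PE : Phi G T (Xh h') k = Phi G T (Xh hist) k.
  by apply: Phi_ext => s sk; rewrite /Xh E1.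
have SE : strat D G T (Xh h') k = Ys.
  by apply: strat_ext => s sk; rewrite /Xh E1.
have XE : Xh h' k = X by rewrite /Xh E2.
have := @step R n D G T (Xh h') k kT (Gp k kT) D0.
rewrite XE SE PE => /(_ dX fX).
rewrite LE; lra.
Qed.

Lemma game_lb (D : R) G T : 0 <= D -> (forall t, (t < T)%N -> 0 < G t) -> (3 <= n)%N ->
  forall m (hist : seq (M * M)), (size hist + m)%N = T ->
  (forall t, (t < size hist)%N -> is_diag_mx (Xh hist t)) ->
  ((Lk (Yh hist) (Xh hist) (size hist) + D / 2 * Phi G T (Xh hist) (size hist))%:E
     <= gameval D G T m hist)%E.
Proof.
move=> D0 Gp n3; elim => [|m IH] hist hs hd.
  rewrite addn0 in hs; rewrite /= hs.
  rewrite PhiT; apply: regret_lb => //; apply: diag_sum => t; rewrite -hs; exact: hd.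
rewrite /=.
set k := size hist.
have kT : (k < T)%N by rewrite -hs /k; lia.
apply: le_ereal_inf_tmp => z [Y [dY fY] <-].
set S := \sum_(s < k) Xh hist s.
have [Xs [dXs fXs oS oY]] := orth_exists S Y n3 (ltW (Gp k kT)).
apply: (@le_trans _ _ (gameval D G T m (rcons hist (Y, Xs)))); last first.
  by apply: ereal_sup_ubound; exists Xs => //; split => //; rewrite fXs.
pose h' := rcons hist (Y, Xs).
have E1 : forall t, (t < k)%N -> nth (0, 0) h' t = nth (0, 0) hist t.
  by move=> t tk; rewrite /h' nth_rcons_lt.
have E2 : nth (0, 0) h' k = (Y, Xs) by rewrite /h' nth_rcons_eq.
have sz : size h' = k.+1 by rewrite /h' size_rcons.
have IH' : ((Lk (Yh h') (Xh h') (size h') + D / 2 * Phi G T (Xh h') (size h'))%:E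
     <= gameval D G T m h')%E.
  apply: IH; first by rewrite sz addSnnS.
  move=> t; rewrite sz ltnS leq_eqVlt => /orP [/eqP ->|tk].
    by rewrite /Xh E2.
  by rewrite /Xh E1 //; apply: hd.
apply: le_trans _ IH'.
rewrite lee_fin sz.
have LE : Lk (Yh h') (Xh h') k.+1 = Lk (Yh hist) (Xh hist) k.
  rewrite /Lk big_ord_recr /= /Yh /Xh E2 /= loss_expD oY oppr0 addr0.
  by apply: eq_bigr => s _; rewrite E1.
have PE : Phi G T (Xh h') k.+1 = Phi G T (Xh hist) k.
  rewrite /Phi big_ord_recr /= (big_ltn kT) {2}/Xh E2 /=.
  have -> : \sum_(i < k) Xh h' i = S by apply: eq_bigr => s _; rewrite /Xh E1.
  rewrite frob_sq ssqD // oS mulr0 addr0 -!frob_sq fXs addrA.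
  done.
by rewrite LE PE.
Qed.

End Game2.

Theorem mainTheorem4 (R : realType) (n : nat) (D : R) (T : nat) (G : nat -> R) :
  (3 <= n)%N -> 0 < D -> (1 <= T)%N -> (forall t, (t < T)%N -> 0 < G t) ->
  V_T n D G T = (D / 2 * Num.sqrt (\sum_(t < T) G t ^+ 2))%:E /\
  (forall X : nat -> 'M[R]_n,
     (forall t, (t < T)%N -> ballG G t (X t)) ->
     (forall t, (t < T)%N -> ballD D (strat D G T X t)) /\
     (regret D T (strat D G T X) X <= (D / 2 * Num.sqrt (\sum_(t < T) G t ^+ 2))%:E)%E).
Proof.
move=> n3 Dp T1 Gp; have D0 := ltW Dp.
have L0 : forall (Y X : nat -> 'M[R]_n), Lk Y X 0 = 0 by move=> Y X; rewrite /Lk big_ord0.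
split.
  apply: le_anti; apply/andP; split.
    have := @game_ub R n D G T D0 Gp T [::] erefl (fun t (h : (t < 0)%N) => False_ind _ (notF h)).
    by rewrite /= L0 Phi0 add0r.
  have := @game_lb R n D G T D0 Gp n3 T [::] erefl (fun t (h : (t < 0)%N) => False_ind _ (notF h)).
  by rewrite /= L0 Phi0 add0r.
move=> X hX; split.
  move=> t tT; apply: strat_ball => //; first exact: Gp.
  by move=> s st; have [] := hX s (ltn_trans st tT).
apply: le_trans (regret_ub _ _ _ _) _.
rewrite lee_fin -(PhiT G) -(Phi0 G T X).
exact: strat_bound.
Qed.
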